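(* Let $N>0$, $R=\mathbb{Q}[x_1,x_2,y_1,y_2]$, $w_2=(y_2^{N+1}-x_2^{N+1})/(y_2-x_2)$, and let $u_1,u_2\in R$ be homogeneous with $y_1^{N+1}+y_2^{N+1}-x_1^{N+1}-x_2^{N+1}=u_1(y_1+y_2-x_1-x_2)+u_2(y_1y_2-x_1x_2)$ and $u_i(y_1,y_2,x_1,x_2)=u_i(x_1,x_2,y_1,y_2)$. Let $\gamma=\frac{\partial u_1}{\partial y_1}-\frac{\partial u_1}{\partial y_2}-\frac12\frac{\partial u_2}{\partial y_2}(x_2+y_2)+\frac12\frac{\partial u_2}{\partial y_1}(x_1+y_1)$ and let $\Omega_2(\gamma)$ be the unique polynomial solution $z$ of $2z+\frac{\partial z}{\partial y_1}(y_1-x_1)+\frac{\partial z}{\partial y_2}(y_2-x_2)=\gamma$. Then $u_1+y_1u_2-w_2$ is divisible by $x_1-y_1$ in $R$, and $\Omega_2(\gamma)=-a_2$, where $a_2=\frac12u_2+\frac{u_1+y_1u_2-w_2}{x_1-y_1}$. *)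

(* Defs.v *)
From HB Require Import structures.
From mathcomp Require Import all_boot all_order all_algebra.
From mathcomp Require Import mpoly.
Set Implicit Arguments. Unset Strict Implicit. Unset Printing Implicit Defensive.
Import Order.TTheory GRing.Theory Num.Theory.
Local Open Scope ring_scope.

Notation R := {mpoly rat[4]}.

Definition ix1 : 'I_4 := @Ordinal 4 0 isT.
Definition ix2 : 'I_4 := @Ordinal 4 1 isT.
Definition iy1 : 'I_4 := @Ordinal 4 2 isT.
Definition iy2 : 'I_4 := @Ordinal 4 3 isT.

Definition x1 : R := 'X_ix1.
Definition x2 : R := 'X_ix2.
Definition y1 : R := 'X_iy1.
Definition y2 : R := 'X_iy2.

(* w2 = (y2^(N+1) - x2^(N+1)) / (y2 - x2) = sum_{i=0}^N y2^i x2^(N-i) *)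
Definition w2 (N : nat) : R := \sum_(i < N.+1) y2 ^+ i * x2 ^+ (N - i).

Definition swap_xy (p : R) : R := p \mPo [tuple y1; y2; x1; x2].

Definition OmegaOp (z : R) : R :=
  2%:R * z + (mderiv iy1 z) * (y1 - x1) + (mderiv iy2 z) * (y2 - x2).

Definition halfp (p : R) : R := (2%:R : rat)^-1 *: p.

Definition gammaA5 (u1 u2 : R) : R :=
  mderiv iy1 u1 - mderiv iy2 u1
  - halfp (mderiv iy2 u2 * (x2 + y2)) + halfp (mderiv iy1 u2 * (x1 + y1)).

Definition homogeneous (p : R) : Prop := exists d : nat, p \in @ishomog1 4 rat d mdeg.

(* Main.v *)
Require Import Defs.
From HB Require Import structures.
From mathcomp Require Import all_boot all_order all_algebra.
From mathcomp Require Import mpoly ring.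
Import Order.TTheory GRing.Theory Num.Theory.
Local Open Scope ring_scope.

Lemma w2E N : (y2 - x2) * w2 N = y2 ^+ N.+1 - x2 ^+ N.+1.
Proof.
rewrite -opprB -[RHS]opprB subrXX mulNr; congr (- (_ * _)).
by apply: eq_bigr => i _; rewrite mulrC.
Qed.

Lemma dXX (i j : 'I_4) : mderiv i ('X_j : R) = (i == j)%:R.
Proof.
rewrite mderivX mnm1E eq_sym; case: eqP => [->|_]; last by rewrite scale0r.
have -> : (U_(j) - U_(j))%MM = 0%MM by apply/mnmP => k; rewrite !mnmE subnn.
by rewrite mpolyX0 scale1r.
Qed.

Lemma dexp i (p : R) k : mderiv i (p ^+ k.+1) = k.+1%:R * p ^+ k * mderiv i p.
Proof.
elim: k => [|k IH]; first by rewrite expr1 expr0 mulr1 mul1r.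
rewrite exprS mderivM IH !exprS. move: (p^+k) => e. ring.
Qed.

Lemma dexp0 i (p : R) k : mderiv i p = 0 -> mderiv i (p ^+ k) = 0.
Proof.
case: k => [|k] h; last by rewrite dexp h mulr0.
by rewrite expr0 -mpolyC1 mderivC.
Qed.

Lemma d11 : mderiv iy1 y1 = 1. Proof. by rewrite dXX. Qed.
Lemma d12 : mderiv iy1 y2 = 0. Proof. by rewrite dXX. Qed.
Lemma d13 : mderiv iy1 x1 = 0. Proof. by rewrite dXX. Qed.
Lemma d14 : mderiv iy1 x2 = 0. Proof. by rewrite dXX. Qed.
Lemma d21 : mderiv iy2 y1 = 0. Proof. by rewrite dXX. Qed.
Lemma d22 : mderiv iy2 y2 = 1. Proof. by rewrite dXX. Qed.
Lemma d23 : mderiv iy2 x1 = 0. Proof. by rewrite dXX. Qed.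
Lemma d24 : mderiv iy2 x2 = 0. Proof. by rewrite dXX. Qed.

Lemma dw1 N : mderiv iy1 (w2 N) = 0.
Proof.
rewrite /w2 raddf_sum big1 // => i _.
change (mderiv iy1 (y2 ^+ i * x2 ^+ (N - i)) = 0).
by rewrite mderivM !dexp0 ?d12 ?d14 // mulr0 mul0r addr0.
Qed.

Lemma y21_neq0 : y2 - x2 != 0.
Proof.
apply/eqP => /(congr1 (meval (fun i : 'I_4 => (i : nat)%:R : rat))).
by rewrite mevalB !mevalXU meval0.
Qed.

Lemma y11_neq0 : y1 - x1 != 0.
Proof.
apply/eqP => /(congr1 (meval (fun i : 'I_4 => (i : nat)%:R : rat))).
by rewrite mevalB !mevalXU meval0.
Qed.
Definition sub1 (p : R) : R := p \mPo [tuple x1; x2; x1; y2].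

Definition Good (p : R) := exists r, p - sub1 p = (y1 - x1) * r.

Lemma ord4 (i : 'I_4) : [\/ i = ix1, i = ix2, i = iy1 | i = iy2].
Proof.
case: i => [[|[|[|[|k]]]] Hk]; [constructor 1|constructor 2|constructor 3|constructor 4|by []];
  exact: val_inj.
Qed.

Lemma sub1X (i : 'I_4) : Good 'X_i.
Proof.
rewrite /Good /sub1 comp_mpolyXU.
case: (ord4 i) => ->; rewrite /=.
- by exists 0; rewrite mulr0 subrr.
- by exists 0; rewrite mulr0 subrr.
- by exists 1; rewrite mulr1.
- by exists 0; rewrite mulr0 subrr.
Qed.

Lemma GoodM p q : Good p -> Good q -> Good (p * q).
Proof.
move=> [r Hr] [s Hs]; exists (r * q + sub1 p * s).
rewrite /sub1 rmorphM /= -/(sub1 p) -/(sub1 q).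
rewrite mulrDr mulrA -Hr mulrCA -Hs. ring.
Qed.

Lemma Good1 : Good 1.
Proof. by exists 0; rewrite /sub1 rmorph1 subrr mulr0. Qed.

Lemma GoodAll p : Good p.
Proof.
elim/mpolyind: p => [|c m p _ _ [r Hr]].
  by exists 0; rewrite /sub1 raddf0 subrr mulr0.
have [s Hs] : Good 'X_[m].
  rewrite mpolyXE_id; elim/big_rec: _ => [|i x _ Hx]; first exact: Good1.
  apply: GoodM => //; elim: (m i) => [|k IH]; first by rewrite expr0; exact: Good1.
  by rewrite exprS; apply: GoodM => //; exact: sub1X.
exists (c *: s + r).
rewrite /sub1 raddfD /= linearZ /= -/(sub1 p) -/(sub1 'X_[m]).
rewrite mulrDr -Hr -scalerAr -Hs scalerBr. ring.
Qed.
Lemma coefMX (p : R) (i : 'I_4) (m : 'X_{1..4}) :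
  (p * 'X_i)@_m = if (0 < m i)%N then p@_(m - U_(i))%MM else 0.
Proof.
case: ifP => hm.
  have -> : m = (U_(i) + (m - U_(i)))%MM.
    by rewrite addmC submK // lep1mP -lt0n.
  by rewrite mcoeffMX addmC addmK.
rewrite mcoeffM big1 // => [[k1 k2]] /= /eqP Em.
rewrite mcoeffX; case: eqP => [Ek|]; last by rewrite mulr0.
move/(congr1 (fun t : 'X_{1..4} => t i)): Em; rewrite /= mnmDE -Ek mnm1E eqxx addn1 => e.
by rewrite e in hm.
Qed.

Lemma seqmax (T : eqType) (s : seq T) (F : T -> nat) x0 : x0 \in s ->
  exists2 m, m \in s & forall m', m' \in s -> (F m' <= F m)%N.
Proof.
elim: s x0 => // a s IH x0 _.
case: (boolP (nilp s)) => [/nilP -> | ne].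
  by exists a; rewrite ?inE // => m'; rewrite inE => /eqP ->.
case: s IH ne => // b s IH _.
have [m ms Hm] := IH b (mem_head b s).
case: (leqP (F a) (F m)) => h.
  exists m; first by rewrite inE ms orbT.
  by move=> m'; rewrite inE => /predU1P [->|]; [exact: h | exact: Hm].
exists a; first exact: mem_head.
move=> m'; rewrite inE => /predU1P [->//|/Hm]; move/leq_trans; apply; exact: ltnW.
Qed.

Lemma Omega_inj (z : R) : OmegaOp z = 0 -> z = 0.
Proof.
move=> Hz; apply/eqP; apply/negP => /negP nz.
have [m0 Hm0] : exists m0, m0 \in msupp z.
  case E: (msupp z) => [|a s]; last by exists a; rewrite mem_head.
  by move: nz; rewrite -msupp_eq0 E.
have [m ms Hm] := @seqmax _ _ (fun m : 'X_{1..4} => (m iy1 + m iy2)%N) _ Hm0.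
have zm : z@_m != 0 by rewrite -mcoeff_msupp.
have out (m' : 'X_{1..4}) : (m iy1 + m iy2 < m' iy1 + m' iy2)%N -> z@_m' = 0.
  move=> lt; apply/eqP; rewrite mcoeff_eq0; apply/negP => /Hm.
  by rewrite leqNgt lt.
have : (OmegaOp z)@_m = z@_m *+ (2 + m iy1 + m iy2).
  rewrite /OmegaOp !mcoeffD mulr_natl mcoeffMn !mulrBr !mcoeffB.
  rewrite /x1 /x2 /y1 /y2 !coefMX.
  have -> : (if (0 < m ix1)%N then (z^`M(iy1))@_(m - U_(ix1)) else 0) = 0.
    case: ifP => // h; rewrite mcoeff_deriv out ?mul0rn //.
    by rewrite !mnmDE !mnmBE !mnm1E /= !subn0 !addn0 addn1 addSn ltnSn.
  have -> : (if (0 < m ix2)%N then (z^`M(iy2))@_(m - U_(ix2)) else 0) = 0.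
    case: ifP => // h; rewrite mcoeff_deriv out ?mul0rn //.
    by rewrite !mnmDE !mnmBE !mnm1E /= !subn0 !addn0 addn1 addnS ltnSn.
  have E1 : (if (0 < m iy1)%N then (z^`M(iy1))@_(m - U_(iy1)) else 0) = z@_m *+ m iy1.
    case: ifP => h; last by move/negbT: h; rewrite -eqn0Ngt => /eqP ->; rewrite mulr0n.
    rewrite mcoeff_deriv submK ?lep1mP -?lt0n //.
    by rewrite mnmBE mnm1E eqxx subn1 prednK.
  have E2 : (if (0 < m iy2)%N then (z^`M(iy2))@_(m - U_(iy2)) else 0) = z@_m *+ m iy2.
    case: ifP => h; last by move/negbT: h; rewrite -eqn0Ngt => /eqP ->; rewrite mulr0n.
    rewrite mcoeff_deriv submK ?lep1mP -?lt0n //.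
    by rewrite mnmBE mnm1E eqxx subn1 prednK.
  by rewrite E1 E2 !subr0 -!mulrnDr.
by rewrite Hz mcoeff0 => /esym/eqP; rewrite mulrn_eq0 (negbTE zm) orbF.
Qed.

Lemma eq_combo {a b c : R} : a = b -> c = a - b -> c = 0.
Proof. by move=> -> ->; rewrite subrr. Qed.

Lemma sx1 : x1 \mPo [tuple x1; x2; x1; y2] = x1. Proof. by rewrite comp_mpolyXU. Qed.
Lemma sx2 : x2 \mPo [tuple x1; x2; x1; y2] = x2. Proof. by rewrite comp_mpolyXU. Qed.
Lemma sy1 : y1 \mPo [tuple x1; x2; x1; y2] = x1. Proof. by rewrite comp_mpolyXU. Qed.
Lemma sy2 : y2 \mPo [tuple x1; x2; x1; y2] = y2. Proof. by rewrite comp_mpolyXU. Qed.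

Lemma sw2 N : sub1 (w2 N) = w2 N.
Proof.
rewrite /sub1 /w2 rmorph_sum; apply: eq_bigr => i _.
by rewrite rmorphM !rmorphXn /= sx2 sy2.
Qed.

Lemma OmegaB z a : OmegaOp (z - a) = OmegaOp z - OmegaOp a.
Proof. rewrite /OmegaOp !mderivB. ring. Qed.

Lemma half2 : 2%:R * ((2%:R : rat)^-1)%:MP - 1 = 0 :> R.
Proof.
by rewrite -(rmorph_nat (@mpolyC 4 rat)) -rmorphM /= mulfV // subrr.
Qed.

Theorem lemmaA5 (N : nat) (u1 u2 : R) :
  (0 < N)%N ->
  homogeneous u1 ->
  homogeneous u2 ->
  y1 ^+ N.+1 + y2 ^+ N.+1 - x1 ^+ N.+1 - x2 ^+ N.+1
    = u1 * (y1 + y2 - x1 - x2) + u2 * (y1 * y2 - x1 * x2) ->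
  swap_xy u1 = u1 ->
  swap_xy u2 = u2 ->
  exists q : R,
    u1 + y1 * u2 - w2 N = (x1 - y1) * q /\
    (forall z : R, OmegaOp z = gammaA5 u1 u2 <-> z = - (halfp u2 + q)).
Proof.
move=> _ _ _ H _ _.
have [r Hr] := GoodAll (u1 + y1 * u2 - w2 N).
have sP : sub1 (u1 + y1 * u2 - w2 N) = 0.
  have Hs := congr1 sub1 H.
  move: Hs; rewrite /sub1 !(rmorphD, rmorphB, rmorphN, rmorphM, rmorphXn) /=.
  rewrite sx1 sx2 sy1 sy2 -/(sub1 u1) -/(sub1 u2) -/(sub1 (w2 N)) sw2.
  move: (sub1 u1) (sub1 u2) => S1 S2 Hs.
  have {}Hs : x1^+N.+1 + y2^+N.+1 - x1^+N.+1 - x2^+N.+1 = S1 * (x1 + y2 - x1 - x2) + S2 * (x1 * y2 - x1 * x2) := Hs.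
  have : (y2 - x2) * (S1 + x1 * S2) = (y2 - x2) * w2 N.
    rewrite w2E; apply/eqP; rewrite -subr_eq0; apply/eqP; apply: (eq_combo (esym Hs)).
    move: (x1 ^+ N.+1) (y2 ^+ N.+1) (x2 ^+ N.+1) => a b c; ring.
  move/(mulfI y21_neq0) => ->; exact: subrr.
rewrite sP subr0 in Hr.
have [q HP] : exists q, u1 + y1 * u2 - w2 N = (x1 - y1) * q.
  by exists (- r); rewrite Hr; ring.
exists q; split => //.
have key : OmegaOp (- (halfp u2 + q)) = gammaA5 u1 u2.
  have E1 := congr1 (mderiv iy1) HP.
  rewrite !(mderivB, mderivD, mderivN, mderivM) d11 d13 dw1 in E1.
  have c1 : mderiv iy1 u1 + u2 + y1 * mderiv iy1 u2 + q + (y1 - x1) * mderiv iy1 q = 0.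
    apply: (eq_combo E1); ring.
  have E2 := congr1 (mderiv iy2) HP.
  rewrite !(mderivB, mderivD, mderivN, mderivM) d21 d23 in E2.
  have c2 : mderiv iy2 u1 + y1 * mderiv iy2 u2 - mderiv iy2 (w2 N) + (y1 - x1) * mderiv iy2 q = 0.
    apply: (eq_combo E2); ring.
  have E3 := congr1 (mderiv iy2) H.
  rewrite !(mderivB, mderivD, mderivN, mderivM, dexp) d21 d22 d23 d24 in E3.
  have c3 : N.+1%:R * y2 ^+ N - (mderiv iy2 u1 * (y1 + y2 - x1 - x2) + u1
      + mderiv iy2 u2 * (y1 * y2 - x1 * x2) + u2 * y1) = 0.
    apply: (eq_combo E3); move: (x1 ^+ N) (y2 ^+ N) (x2 ^+ N) (y1 ^+ N) => a b c d; ring.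
  have E4 := congr1 (mderiv iy2) (w2E N).
  rewrite !(mderivB, mderivN, mderivM, dexp) d22 d24 in E4.
  have c4 : w2 N + (y2 - x2) * mderiv iy2 (w2 N) - N.+1%:R * y2 ^+ N = 0.
    apply: (eq_combo E4); move: (y2 ^+ N) (x2 ^+ N) => a b; ring.
  have cP : u1 + y1 * u2 - w2 N - (x1 - y1) * q = 0 by rewrite HP subrr.
  move: c3 c4; move: (N.+1%:R * y2 ^+ N) => K c3 c4.
  rewrite /OmegaOp /gammaA5 /halfp -!mul_mpolyC !mderivN !mderivD !mderiv_mulC.
  have ch := half2.
  move: ((2%:R : rat)^-1)%:MP ch => h ch.
  apply: (mulfI y11_neq0).
  apply/eqP; rewrite -subr_eq0; apply/eqP.
  set d1u1 := mderiv iy1 u1; set d2u1 := mderiv iy2 u1.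
  set d1u2 := mderiv iy1 u2; set d2u2 := mderiv iy2 u2.
  set d1q := mderiv iy1 q; set d2q := mderiv iy2 q; set d2w := mderiv iy2 (w2 N).
  set e1 := d1u1 + u2 + _ + _ + _ in c1.
  set e2 := d2u1 + _ - _ + _ in c2.
  set e3 := K - _ in c3.
  set e4 := w2 N + _ - K in c4.
  set eP := u1 + _ - _ - _ in cP.
  set eh := 2%:R * h - 1 in ch.
  transitivity (- (y1 - x1) * e1 - (y2 - x2) * e2 - eP - (y1 - x1) * u2 * eh
     - (y1 - x1) * y1 * d1u2 * eh + (y1 - x1) * x2 * d2u2 * eh - e3 - e4).
    rewrite /e1 /e2 /e3 /e4 /eP /eh; ring.
  rewrite c1 c2 c3 c4 cP ch; ring.
move=> z; split => [Hz|->//].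
apply/eqP; rewrite -subr_eq0; apply/eqP; apply: Omega_inj.
by rewrite OmegaB Hz key subrr.
Qed.
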